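(* Let $M$ be a Hausdorff topological abelian group. Let $f\colon[0,\infty)^n\to M$ be a function that in each variable (with the other variables fixed) is a continuous semigroup homomorphism $([0,\infty),+)\to M$. Then for any $i\neq j$ and any $a,\lambda_1,\ldots,\lambda_n\in[0,\infty)$, \[f(\lambda_1,\ldots,a\lambda_i,\ldots,\lambda_n)=f(\lambda_1,\ldots,a\lambda_j,\ldots,\lambda_n),\] where on the left $\lambda_i$ is replaced by $a\lambda_i$ and on the right $\lambda_j$ is replaced by $a\lambda_j$. Consequently $f(\lambda_1,\ldots,\lambda_n)=g(\lambda_1\cdots\lambda_n)$, where $g\colon[0,\infty)\to M$ is the homomorphism $g(\lambda)=f(\lambda,1,\ldots,1)$. *)

(* Defs.v *)
From HB Require Import structures.
From mathcomp Require Import all_boot all_order all_algebra.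
From mathcomp Require Import all_classical all_reals all_analysis.
Set Implicit Arguments. Unset Strict Implicit. Unset Printing Implicit Defensive.
Import Order.TTheory GRing.Theory Num.Theory.
Local Open Scope ring_scope.

(* A point of [0,oo)^n is represented by lam : 'I_n -> R with nonnegative
   entries.  [upd lam i x] replaces the i-th coordinate of lam by x. *)
Definition upd (R : Type) (n : nat) (lam : 'I_n -> R) (i : 'I_n) (x : R) : 'I_n -> R :=
  fun k => if k == i then x else lam k.

Definition sep_cont_hom (R : realType) (M : topologicalZmodType) (n : nat)
  (f : ('I_n -> R) -> M) : Prop :=
  forall (i : 'I_n) (lam : 'I_n -> R), (forall k, 0 <= lam k) ->
    (forall x y : R, 0 <= x -> 0 <= y ->
       f (upd lam i (x + y)) = f (upd lam i x) + f (upd lam i y)) /\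
    {within `[0, +oo[%classic, continuous (fun x : R => f (upd lam i x))}%classic.

(* Main.v *)
Require Import Defs.
From HB Require Import structures.
From mathcomp Require Import all_boot all_order all_algebra.
From mathcomp Require Import all_classical all_reals all_analysis.
From mathcomp Require Import lra ring.
Import Order.TTheory GRing.Theory Num.Theory numFieldNormedType.Exports.
Local Open Scope ring_scope.
Local Open Scope classical_set_scope.
Set Implicit Arguments. Unset Strict Implicit.

Lemma seq_within (R : realType) (M : topologicalType) (h : R -> M)
  (hc : {within `[0, +oo[%classic, continuous h}) (s : nat -> R)
  (hs : forall N, 0 <= s N) (c : R) (c0 : 0 <= c) (hsc : s x @[x --> \oo] --> c) :
  h (s x) @[x --> \oo] --> h c.
Proof.
have Ac : `[0, +oo[%classic c by rewrite /= in_itv /= andbT.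
have := (@subspace_continuousP _ _ _ h).1 hc c Ac.
apply: cvg_trans.
move=> P /= hP.
have {hP} : within `[0, +oo[ (nbhs c) (h @^-1` P) by exact: hP.
move=> /nbhs_ballP [e /= e0 HP].
have := hsc _ (nbhsx_ballx c e e0).
move=> H; change (\forall N \near \oo, P (h (s N))); near=> N; apply: HP; [near: N; exact: H|].
by rewrite in_itv /= hs. Unshelve. all: by end_near. Qed.

Definition qapp (R : realType) (a : R) (N : nat) : R :=
  (Num.truncn (a * N.+1%:R))%:R / N.+1%:R.

Arguments qapp {R}.
Lemma qapp_ge0 (R : realType) (a : R) N : 0 <= qapp a N.
Proof. by rewrite /qapp divr_ge0. Qed.

Lemma qapp_cvg (R : realType) (a : R) : 0 <= a -> qapp a N @[N --> \oo] --> a.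
Proof.
move=> a0; apply/cvgrPdist_le => e e0.
have H := (cvgrPdist_le _ _).1 (@cvg_harmonic R) e e0.
near=> N.
have hN : `|0 - harmonic N| <= e by near: N; exact: H.
move: hN; rewrite /= sub0r normrN ger0_norm // => hN.
apply: le_trans hN.
have k0 : 0 < N.+1%:R :> R by [].
have /andP[t1 t2] := truncn_itv (mulr_ge0 a0 (ltW k0)).
rewrite /qapp ger0_norm; last first.
  by rewrite subr_ge0 ler_pdivrMr.
set t := (Num.Def.trunc _)%:R in t1 t2 *.
rewrite -(ler_pM2r k0) mulrBl divfK ?mulVf ?gt_eqF //.
have t2' : a * N.+1%:R < t + 1 by rewrite /t natr1.
lra.
Unshelve. all: by end_near. Qed.

Lemma addhom_natmul (R : realType) (M : zmodType) (h : R -> M)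
  (hadd : forall x y, 0 <= x -> 0 <= y -> h (x + y) = h x + h y) x m :
  0 <= x -> h (x *+ m) = h x *+ m.
Proof.
move=> x0.
have h0 : h 0 = 0.
  have := hadd 0 0 (lexx _) (lexx _); rewrite addr0 => H.
  by apply: (addrI (h 0)); rewrite addr0 -H.
elim: m => [|m IH]; first by rewrite !mulr0n.
by rewrite !mulrS hadd ?IH // mulrn_wge0.
Qed.

Lemma bi_swap (R : realType) (M : topologicalZmodType) (hM : hausdorff_space M)
  (F : R -> R -> M)
  (addl : forall y, 0 <= y -> forall x x', 0 <= x -> 0 <= x' ->
      F (x + x') y = F x y + F x' y)
  (addr : forall x, 0 <= x -> forall y y', 0 <= y -> 0 <= y' ->
      F x (y + y') = F x y + F x y')
  (contl : forall y, 0 <= y -> {within `[0, +oo[%classic, continuous (fun x => F x y)})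
  (contr : forall x, 0 <= x -> {within `[0, +oo[%classic, continuous (F x)})
  a x y : 0 <= a -> 0 <= x -> 0 <= y -> F (a * x) y = F x (a * y).
Proof.
move=> a0 x0 y0.
have natl u v m : 0 <= u -> 0 <= v -> F (u *+ m) v = F u v *+ m.
  by move=> u0 v0; exact: (@addhom_natmul _ _ (fun z => F z v) (addl v v0) u m u0).
have natr u v m : 0 <= u -> 0 <= v -> F u (v *+ m) = F u v *+ m.
  by move=> u0 v0; exact: (@addhom_natmul _ _ (F u) (addr u u0) v m v0).
have rat N : F (qapp a N * x) y = F x (qapp a N * y).
  rewrite /qapp; set t := Num.truncn _; set k := N.+1%:R.
  have k0 : 0 < k :> R by [].
  have xk : x = (x / k) *+ N.+1 by rewrite -mulr_natr divfK ?gt_eqF.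
  have yk : y = (y / k) *+ N.+1 by rewrite -mulr_natr divfK ?gt_eqF.
  have xt : t%:R / k * x = (x / k) *+ t by rewrite -mulr_natr; ring.
  have yt : t%:R / k * y = (y / k) *+ t by rewrite -mulr_natr; ring.
  have xk0 : 0 <= x / k by rewrite divr_ge0 // ltW.
  have yk0 : 0 <= y / k by rewrite divr_ge0 // ltW.
  rewrite xt yt {2}xk {1}yk.
  rewrite natl ?mulrn_wge0 // natr // natr ?mulrn_wge0 // natl //.
have L1 : F (qapp a N * x) y @[N --> \oo] --> F (a * x) y.
  apply: (seq_within (h := fun z => F z y)) => //.
  - exact: contl.
  - by move=> N; rewrite mulr_ge0 // qapp_ge0.
  - by rewrite mulr_ge0.
  - exact: cvgMr_tmp (qapp_cvg a0).
have L2 : F x (qapp a N * y) @[N --> \oo] --> F x (a * y).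
  apply: (seq_within (h := F x)) => //.
  - exact: contr.
  - by move=> N; rewrite mulr_ge0 // qapp_ge0.
  - by rewrite mulr_ge0.
  - exact: cvgMr_tmp (qapp_cvg a0).
have E : (fun N => F (qapp a N * x) y) = (fun N => F x (qapp a N * y)).
  by apply: funext => N; exact: rat.
rewrite E in L1.
exact: (cvg_unique hM L1 L2).
Qed.

Lemma upd_comm (R : Type) n (l : 'I_n -> R) i j x y : i != j ->
  upd (upd l i x) j y = upd (upd l j y) i x.
Proof.
move=> ij; apply: funext => k; rewrite /upd.
case: (k =P j) => [kj|nkj]; case: (k =P i) => [ki|nki] //.
by move: ij; rewrite -kj -ki eqxx.
Qed.

Lemma upd_same (R : Type) n (l : 'I_n -> R) i : upd l i (l i) = l.
Proof. by apply: funext => k; rewrite /upd; case: (k =P i) => [->|]. Qed.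

Lemma upd_upd (R : Type) n (l : 'I_n -> R) i x y : upd (upd l i x) i y = upd l i y.
Proof. by apply: funext => k; rewrite /upd; case: (k =P i). Qed.

Lemma upd_ge0 (R : realType) n (l : 'I_n -> R) i x :
  (forall k, 0 <= l k) -> 0 <= x -> forall k, 0 <= upd l i x k.
Proof. by move=> l0 x0 k; rewrite /upd; case: (k == i). Qed.

Lemma part1 (R : realType) (M : topologicalZmodType) (n : nat)
  (hM : hausdorff_space M) (f : ('I_n -> R) -> M) (hf : sep_cont_hom f) :
  (forall (i j : 'I_n) (a : R) (lam : 'I_n -> R), i != j -> 0 <= a ->
     (forall k, 0 <= lam k) ->
     f (upd lam i (a * lam i)) = f (upd lam j (a * lam j))).
Proof.
move=> i j a lam ij a0 l0.
pose F x y := f (upd (upd lam i x) j y).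
have FC x y : F x y = f (upd (upd lam j y) i x) by rewrite /F upd_comm.
have e1 : f (upd lam i (a * lam i)) = F (a * lam i) (lam j).
  rewrite /F; congr f; apply: funext => k; rewrite /upd.
  case: (k =P j) => [->|//]; by rewrite eq_sym (negbTE ij).
have e2 : f (upd lam j (a * lam j)) = F (lam i) (a * lam j).
  by rewrite /F upd_same.
rewrite e1 e2; apply: bi_swap => //.
- move=> y y0 x x' x0 x'0; rewrite !FC.
  exact: ((hf i (upd lam j y) (@upd_ge0 _ _ lam j y l0 y0)).1 x x' x0 x'0).
- move=> x x0 y y' y0 y'0.
  exact: ((hf j (upd lam i x) (@upd_ge0 _ _ lam i x l0 x0)).1 y y' y0 y'0).
- move=> y y0.
  have -> : (fun x => F x y) = (fun x => f (upd (upd lam j y) i x)).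
    by apply: funext => x; rewrite FC.
  exact: (hf i (upd lam j y) (@upd_ge0 _ _ lam j y l0 y0)).2.
- move=> x x0.
  exact: (hf j (upd lam i x) (@upd_ge0 _ _ lam i x l0 x0)).2.
Qed.

Lemma prod_move (R : realType) n (l : 'I_n -> R) (i j : 'I_n) : i != j ->
  \prod_k upd (upd l j 1) i (l j * upd l j 1 i) k = \prod_k l k.
Proof.
move=> ij.
have ji : j != i by rewrite eq_sym.
rewrite (bigD1 i) //= [RHS](bigD1 i) //=.
rewrite {1}/upd eqxx {1}/upd (negbTE ij).
rewrite (eq_bigr (fun k => upd l j 1 k)); last first.
  by move=> k ki; rewrite /upd (negbTE ki).
rewrite (bigD1 j) //= [in RHS](bigD1 j) //=.
rewrite {1}/upd eqxx.
rewrite (eq_bigr (fun k => l k)); last first.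
  by move=> k /andP[_ kj]; rewrite /upd (negbTE kj).
by rewrite mul1r mulrCA mulrA.
Qed.

Local Close Scope classical_set_scope.

Theorem proposition3p7 (R : realType) (M : topologicalZmodType) (n : nat)
  (hM : hausdorff_space M) (f : ('I_n -> R) -> M) (hf : sep_cont_hom f) :
  (forall (i j : 'I_n) (a : R) (lam : 'I_n -> R), i != j -> 0 <= a ->
     (forall k, 0 <= lam k) ->
     f (upd lam i (a * lam i)) = f (upd lam j (a * lam j))) /\
  ((0 < n)%N ->
   let g := fun x : R => f (fun k : 'I_n => if val k == 0%N then x else 1) in
   forall lam : 'I_n -> R, (forall k, 0 <= lam k) ->
     f lam = g (\prod_(k < n) lam k)).
Proof.
have P1 := part1 hM hf.
split => // n0 g.
pose i0 : 'I_n := Ordinal n0.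
have Q m : forall lam : 'I_n -> R, (forall k, 0 <= lam k) ->
    (forall k : 'I_n, (m.+1 <= val k)%N -> lam k = 1) ->
    f lam = g (\prod_(k < n) lam k).
  elim: m => [|m IH] lam l0 l1.
    have ki0 k : k != i0 -> lam k = 1.
      move=> ki; apply: l1; rewrite lt0n; apply: contra ki => /eqP k0.
      by apply/eqP/val_inj.
    rewrite (bigD1 i0) //= big1 ?mulr1; last by move=> k; exact: ki0.
    rewrite /g; congr f; apply: funext => k.
    case: (boolP (k == i0)) => [/eqP ->|ki] //=.
    rewrite ki0 //; case: ifP => // /eqP k0.
    by move: ki; have -> : k = i0 by apply: val_inj.
  have [mn|nm] := ltnP m.+1 n; last first.
    apply: IH => // k hk.
    by have := ltn_ord k; rewrite ltnNge (leq_trans nm hk).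
  pose j : 'I_n := Ordinal mn.
  have ij : i0 != j by [].
  pose lam' := upd lam j 1.
  have E : upd lam' j (lam j * lam' j) = lam.
    by rewrite /lam' upd_upd {2}/upd eqxx mulr1 upd_same.
  have lam'0 k : 0 <= lam' k by rewrite /lam' /upd; case: ifP.
  rewrite -{1}E -(P1 i0 j (lam j) lam' ij (l0 j) lam'0).
  rewrite IH.
  - by congr g; rewrite /lam' prod_move.
  - by apply: upd_ge0 => //; rewrite mulr_ge0.
  move=> k hk; rewrite /upd.
  case: (k =P i0) => [ki|ki]; first by move: hk; rewrite ki.
  rewrite /lam' /upd; case: (k =P j) => [//|kj].
  apply: l1; rewrite ltn_neqAle hk andbT; apply/eqP => kv.
  by apply: kj; apply: val_inj.
move=> lam l0; apply: (Q n lam l0) => k hk.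
by have := ltn_ord k; rewrite ltnNge (leq_trans (leqnSn n) hk).
Qed.
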